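(* Let $D=(\mathcal V,\mathcal A)$, $F$, $B$ and $T=(V,A,L)$ with root $r$ be as in the context, let $\mathcal S=F^{-1}(1)\cup B^{-1}(\mathbb N^+)$, and let $Q(X,z)$ be the polynomial defined there. Then $Q(X,z)$ contains, in its sum-product expansion (with nonzero coefficient), a monomial of the form $z^{|\mathcal S|}\,b(X)$, where $b(X)$ is a multilinear monomial in exactly $\eta$ distinct variables from $X=\{x_w: w\in\mathcal V\}$, if and only if $T$ has an $\mathcal S$-embedding into $D$.
   Context: $D=(\mathcal V,\mathcal A)$ is a digraph with $F:\mathcal V\to\{0,1\}$, $B:\mathcal V\to\mathbb N$; $T=(V,A)$ is a directed tree (orientation of a tree) of order $\eta$ with $L:V\to\mathbb N$, rooted at a vertex $r$; for $u\ne r$, $p(u)$ is its parent. For $u\in V$ let $N^{in}(u)=\{v: (v,u)\in A,\ v\neq p(u)\}$ and $N^{out}(u)=\{v:(u,v)\in A,\ v\ne p(u)\}$ (so $N^{in}(u)\cup N^{out}(u)$ is the set of children of $u$). Let $\mathcal S=F^{-1}(1)\cup B^{-1}(\mathbb N^+)$. Variables: $x_w$ for $w\in\mathcal V$, and $z$. For $u\in V,w\in\mathcal V$ set $\zeta(u,w)=z$ if $w\in\mathcal S$ and $L(u)\le B(w)$; $\zeta(u,w)=1$ if $w\notin\mathcal S$ and $L(u)\le B(w)$; $\zeta(u,w)=0$ if $L(u)>B(w)$. Define $Q_{u,w}(X)$ bottom-up: if $u$ has no children, $Q_{u,w}=\zeta(u,w)x_w$; otherwise $Q_{u,w}=\zeta(u,w)\,x_w\cdot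 Q^+_{u,w}\cdot Q^-_{u,w}$, where $Q^+_{u,w}=\prod_{v\in N^{in}(u)}\sum_{(w',w)\in\mathcal A}Q_{v,w'}$ and $Q^-_{u,w}=\prod_{v\in N^{out}(u)}\sum_{(w,w')\in\mathcal A}Q_{v,w'}$ (an empty product being omitted, i.e. equal to $1$). Finally $Q(X,z)=\sum_{w\in\mathcal V}Q_{r,w}(X)$. $T$ has an $\mathcal S$-embedding into $D$ if there is an injective map $f:V\to\mathcal V$ such that (E1) $(u,v)\in A$ implies $(f(u),f(v))\in\mathcal A$; (E2) $\mathcal S\subseteq f(V)$; (E3) $L(v)\le B(f(v))$ for all $v\in V$. *)

(* Defs.v *)
From mathcomp Require Import all_boot.
Set Implicit Arguments. Unset Strict Implicit. Unset Printing Implicit Defensive.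

(* A term of the sum-product expansion: the monomial  prod_w x_w^(e w) * z^k,
   represented as (e, k). A polynomial with nonnegative integer coefficients
   is represented by its sum-product expansion, a multiset (seq) of such
   terms each with coefficient 1; the coefficient of a monomial is its
   multiplicity. *)
Definition term (Vd : finType) := ({ffun Vd -> nat} * nat)%type.

Definition tmul (Vd : finType) (a b : term Vd) : term Vd :=
  ([ffun w => a.1 w + b.1 w], a.2 + b.2).

Definition pmul (Vd : finType) (P Q : seq (term Vd)) : seq (term Vd) :=
  [seq tmul a b | a <- P, b <- Q].

Definition tone (Vd : finType) : term Vd := ([ffun _ => 0], 0).
Definition tz (Vd : finType) : term Vd := ([ffun _ => 0], 1).
Definition xvar (Vd : finType) (w : Vd) : term Vd := ([ffun w' => nat_of_bool (w' == w)], 0).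

Definition coef (Vd : finType) (P : seq (term Vd)) (m : term Vd) : nat := count_mem m P.

Definition inS (Vd : finType) (F : Vd -> bool) (B : Vd -> nat) (w : Vd) : bool :=
  F w || (0 < B w).
Definition Sset (Vd : finType) (F : Vd -> bool) (B : Vd -> nat) : {set Vd} :=
  [set w | inS F B w].

(* zeta(u,w) as an expansion: 0 -> [::], 1 -> [:: 1], z -> [:: z] *)
Definition zeta (Vd V : finType) (F : Vd -> bool) (B : Vd -> nat) (L : V -> nat)
    (u : V) (w : Vd) : seq (term Vd) :=
  if L u <= B w then (if inS F B w then [:: tz Vd] else [:: tone Vd]) else [::].

Definition Nin (V : finType) (A : rel V) (p : V -> V) (u : V) : seq V :=
  [seq v <- enum V | A v u && (v != p u)].
Definition Nout (V : finType) (A : rel V) (p : V -> V) (u : V) : seq V :=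
  [seq v <- enum V | A u v && (v != p u)].

(* Q_{u,w}, computed bottom-up with a fuel parameter n (fuel #|V| suffices,
   since every vertex has depth < #|V|). Empty products are 1. *)
Fixpoint Qf (Vd V : finType) (arcs : rel Vd) (F : Vd -> bool) (B : Vd -> nat)
    (A : rel V) (p : V -> V) (L : V -> nat) (n : nat) (u : V) (w : Vd)
    : seq (term Vd) :=
  match n with
  | 0 => [::]
  | n'.+1 =>
      pmul (pmul (zeta F B L u w) [:: xvar w])
        (pmul
          (foldr (fun v acc =>
             pmul (flatten [seq Qf arcs F B A p L n' v w' | w' <- enum Vd & arcs w' w]) acc)
             [:: tone Vd] (Nin A p u))
          (foldr (fun v acc =>
             pmul (flatten [seq Qf arcs F B A p L n' v w' | w' <- enum Vd & arcs w w']) acc)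
             [:: tone Vd] (Nout A p u)))
  end.

Definition Qpoly (Vd V : finType) (arcs : rel Vd) (F : Vd -> bool) (B : Vd -> nat)
    (A : rel V) (p : V -> V) (L : V -> nat) (r : V) : seq (term Vd) :=
  flatten [seq Qf arcs F B A p L #|V| r w | w <- enum Vd].

(* T = (V,A) is an orientation of a tree, rooted at r, with parent function p
   (convention p r = r): the edges of the underlying tree are exactly the
   pairs {u, p u} (u <> r), each oriented in exactly one direction. *)
Definition rooted_oriented_tree (V : finType) (A : rel V) (r : V) (p : V -> V) : Prop :=
  [/\ p r = r,
      (forall u, exists k, iter k p u = r),
      (forall u, u != r -> A u (p u) (+) A (p u) u)
    & (forall u v, A u v -> (u != r /\ v = p u) \/ (v != r /\ u = p v))].

Definition S_embedding (Vd V : finType) (arcs : rel Vd) (F : Vd -> bool) (B : Vd -> nat)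
    (A : rel V) (L : V -> nat) : Prop :=
  exists f : V -> Vd,
    [/\ injective f,
        (forall u v, A u v -> arcs (f u) (f v)),
        (forall w, inS F B w -> exists v, f v = w)
      & (forall v, L v <= B (f v))].

(* Main.v *)
Require Import Defs.
From mathcomp Require Import all_boot zify.
Set Implicit Arguments. Unset Strict Implicit. Unset Printing Implicit Defensive.

Section Tree.
Variables (V : finType) (A : rel V) (r : V) (p : V -> V).
Hypothesis Htree : rooted_oriented_tree A r p.

Lemma pr : p r = r. Proof. by case: Htree. Qed.
Lemma reach u : exists k, iter k p u == r.
Proof. by case: Htree => _ H _ _; case: (H u) => k Hk; exists k; apply/eqP. Qed.

Definition depth u := ex_minn (reach u).

Lemma depth_spec u : iter (depth u) p u = r /\ forall k, iter k p u = r -> depth u <= k.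
Proof.
rewrite /depth; case: ex_minnP => d /eqP Hd Hmin; split => // k Hk.
by apply: Hmin; apply/eqP.
Qed.

Lemma iter_r k : iter k p r = r.
Proof. by elim: k => //= k ->; rewrite pr. Qed.

Lemma depth0 u : (depth u == 0) = (u == r).
Proof.
case: (depth_spec u) => H1 H2; apply/eqP/eqP => [H|E].
  by rewrite H in H1.
by apply/eqP; rewrite -leqn0; apply: H2; rewrite /= E.
Qed.

Lemma depth_p y : depth (p y) = (depth y).-1.
Proof.
case: (eqVneq y r) => [->|yr]; first by rewrite pr; have := depth0 r; rewrite eqxx => /eqP ->.
case: (depth_spec y) => H1 H2; case: (depth_spec (p y)) => H3 H4.
have : depth y != 0 by rewrite depth0.
case Ed: (depth y) => [|k] // _ /=.
apply/eqP; rewrite eqn_leq; apply/andP; split.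
  by apply: H4; rewrite -iterSr -Ed.
have := H2 (depth (p y)).+1; rewrite Ed ltnS; apply; by rewrite iterSr.
Qed.

Lemma depth_iter k y : depth (iter k p y) = depth y - k.
Proof. by elim: k => [|k IH]; rewrite ?subn0 //= depth_p IH subnS. Qed.

Lemma depth_lt u : depth u < #|V|.
Proof.
set d := depth u.
have Hu : uniq [seq iter i p u | i <- iota 0 d.+1].
  rewrite map_inj_in_uniq ?iota_uniq // => i j; rewrite !mem_iota !add0n !ltnS => Hi Hj Hij.
  have := depth_iter i u; rewrite Hij depth_iter => E.
  rewrite -/d in E; lia.
have := card_uniqP Hu; rewrite size_map size_iota => <-.
by apply: max_card.
Qed.

Lemma depth_S v : v != r -> depth v = (depth (p v)).+1.
Proof. by rewrite -depth0 depth_p; case: (depth v). Qed.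

Lemma Hxor u : u != r -> A u (p u) (+) A (p u) u.
Proof. by case: Htree => _ _ H _; apply: H. Qed.
Lemma Hedge u v : A u v -> (u != r /\ v = p u) \/ (v != r /\ u = p v).
Proof. by case: Htree => _ _ _; apply. Qed.

Lemma pp_neq y : y != r -> y != p (p y).
Proof.
move=> yr; apply/eqP => E.
have H1 := depth_S yr; have H2 := depth_p (p y); rewrite -E in H2.
lia.
Qed.

Definition ch u := Nin A p u ++ Nout A p u.

Lemma Nin_p u v : v \in Nin A p u -> [/\ p v = u, v != r & A v u].
Proof.
rewrite mem_filter => /andP [/andP [Hvu Hn] _].
case: (Hedge Hvu) => [[vr E]|[ur E]]; first by subst u.
by rewrite E eqxx in Hn.
Qed.

Lemma Nout_p u v : v \in Nout A p u -> [/\ p v = u, v != r & A u v].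
Proof.
rewrite mem_filter => /andP [/andP [Hvu Hn] _].
case: (Hedge Hvu) => [[vr E]|[ur E]]; last by subst u.
by rewrite E eqxx in Hn.
Qed.

Lemma ch_p u v : v \in ch u -> p v = u /\ v != r.
Proof. by rewrite mem_cat => /orP [/Nin_p|/Nout_p] []. Qed.

Lemma ch_in y : y != r -> y \in ch (p y).
Proof.
move=> yr; have Hn := pp_neq yr; rewrite mem_cat !mem_filter Hn /=.
have := Hxor yr; case: (A y (p y)); case: (A (p y) y) => //= _; by rewrite -enumT mem_enum.

Qed.

Lemma Nin_Nout u v : v \in Nin A p u -> v \in Nout A p u -> False.
Proof.
move=> /Nin_p [E vr H1] /Nout_p [_ _ H2]; have := Hxor vr; by rewrite E H1 H2.
Qed.

Lemma uniq_ch u : uniq (ch u).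
Proof.
rewrite cat_uniq !filter_uniq -?enumT ?enum_uniq //= ?andbT.
apply/hasPn => v H2; apply/negP => H1; exact: (Nin_Nout H1 H2).
Qed.

Definition desc u x := iter (depth x - depth u) p x == u.

Lemma descP u x : reflect (exists k, iter k p x = u) (desc u x).
Proof.
apply: (iffP eqP) => [H|[k Hk]]; first by exists (depth x - depth u).
have := depth_iter k x; rewrite Hk => Du.
case: (leqP k (depth x)) => Hk'.
  by rewrite Du subKn.
have Ed : iter (depth x) p x = r by case: (depth_spec x).
have Hr : u = r by rewrite -Hk -(subnK (ltnW Hk')) iterD Ed iter_r.
by rewrite Hr; have := depth0 r; rewrite eqxx => /eqP ->; rewrite subn0.
Qed.

Lemma desc_refl u : desc u u.
Proof. by apply/descP; exists 0. Qed.

Lemma desc_up v x : desc v x -> desc (p v) x.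
Proof. by move/descP => [k Hk]; apply/descP; exists k.+1; rewrite iterS Hk. Qed.

Lemma desc_p v a : desc v a -> a != v -> desc v (p a).
Proof.
move/descP => [[|k] Hk]; first by move: Hk => /= ->; rewrite eqxx.
by move=> _; apply/descP; exists k; rewrite -iterSr.
Qed.

Lemma desc_depth v x : desc v x -> depth v <= depth x.
Proof. by move/descP => [k <-]; rewrite depth_iter leq_subr. Qed.

Lemma desc_decomp u x : desc u x -> x != u -> exists2 v, v \in ch u & desc v x.
Proof.
rewrite /desc; move: (leq_subr (depth u) (depth x)).
case: (depth x - depth u) => [|k] Hle /eqP Hk; first by move: Hk => /= ->; rewrite eqxx.
move=> _; exists (iter k p x); last by apply/descP; exists k.
have vr : iter k p x != r.
  apply/eqP => E.
  have := depth_iter k x; rewrite E; have := depth0 r; rewrite eqxx => /eqP ->.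
  lia.
have := ch_in vr; by rewrite -iterS Hk.
Qed.

Lemma desc_uniq v1 v2 x : depth v1 = depth v2 -> desc v1 x -> desc v2 x -> v1 = v2.
Proof. by rewrite /desc => -> /eqP -> /eqP. Qed.

Lemma not_desc_parent v : v != r -> ~~ desc v (p v).
Proof.
move=> vr; apply/negP => /desc_depth; rewrite depth_p.
have : depth v != 0 by rewrite depth0.
lia.
Qed.

Variables (Vd : finType) (arcs : rel Vd) (F : Vd -> bool) (B : Vd -> nat) (L : V -> nat).

Definition D u : {set V} := [set x | desc u x].
Definition DL (s : seq V) : {set V} := foldr (fun v S => D v :|: S) set0 s.
Definition mono (f : V -> Vd) (X : {set V}) : term Vd :=
  ([ffun w => #|X :&: [set x | f x == w]|], #|X :&: [set x | inS F B (f x)]|).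

Lemma mem_DL x s : (x \in DL s) = has (fun v => x \in D v) s.
Proof. by elim: s => [|v s IH] /=; rewrite ?inE // IH. Qed.

Lemma mono0 f : mono f set0 = tone Vd.
Proof. by rewrite /mono /tone; congr pair; [apply/ffunP => w; rewrite !ffunE|]; rewrite set0I cards0. Qed.

Lemma card_disjU (X Y S : {set V}) : [disjoint X & Y] -> #|(X :|: Y) :&: S| = #|X :&: S| + #|Y :&: S|.
Proof.
move=> /disjoint_setI0 H; rewrite setIUl cardsU.
have -> : X :&: S :&: (Y :&: S) = set0.
  apply/setP => x; have := congr1 (fun Z : {set V} => x \in Z) H; rewrite !inE /=.
  by case: (x \in X); case: (x \in Y); case: (x \in S).
by rewrite cards0 subn0.
Qed.

Lemma monoU f (X Y : {set V}) : [disjoint X & Y] -> mono f (X :|: Y) = tmul (mono f X) (mono f Y).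
Proof.
move=> H; rewrite /mono /tmul /=; congr pair; [apply/ffunP => w; rewrite !ffunE|]; exact: card_disjU.
Qed.

Lemma mono_ext f g (X : {set V}) : {in X, f =1 g} -> mono f X = mono g X.
Proof.
move=> H; rewrite /mono; congr pair; [apply/ffunP => w; rewrite !ffunE|]; 
  apply: eq_card => x; rewrite !inE; case Hx: (x \in X) => //=; by rewrite H.
Qed.

Lemma card_set1I (u : V) (S : {set V}) : #|[set u] :&: S| = (u \in S).
Proof.
case: (boolP (u \in S)) => H.
  have -> : [set u] :&: S = [set u] by apply/setP => x; rewrite !inE; case: eqP => // ->.
  by rewrite cards1.
have -> : [set u] :&: S = set0 by apply/setP => x; rewrite !inE; case: eqP => // ->; rewrite (negbTE H).
by rewrite cards0.
Qed.

Definition zt (w : Vd) : term Vd := if inS F B w then tz Vd else tone Vd.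

Lemma mono1 f u : mono f [set u] = tmul (zt (f u)) (xvar (f u)).
Proof.
rewrite /mono /tmul /zt /xvar; congr pair; [apply/ffunP => w; rewrite !ffunE|];
 rewrite card_set1I inE; case: (inS F B (f u)) => //=; by rewrite ffunE eq_sym.
Qed.

Lemma mem_pmul (P Q : seq (term Vd)) a b : a \in P -> b \in Q -> tmul a b \in pmul P Q.
Proof. by move=> Ha Hb; apply: allpairs_f. Qed.

Lemma pmulP (P Q : seq (term Vd)) m : m \in pmul P Q -> exists a b, [/\ a \in P, b \in Q & m = tmul a b].
Proof. by move/allpairsP => [[a b] /= [Ha Hb ->]]; exists a, b. Qed.

Lemma disjP (X Y : {set V}) : (forall x, x \in X -> x \in Y -> False) -> [disjoint X & Y].
Proof.
move=> H; rewrite disjoint_subset; apply/subsetP => x Hx; rewrite inE; apply/negP => Hy; exact: H Hx Hy.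
Qed.

Lemma disj_ch u v v' x : v \in ch u -> v' \in ch u -> x \in D v -> x \in D v' -> v = v'.
Proof.
move=> /ch_p [E1 r1] /ch_p [E2 r2]; rewrite !inE; apply: desc_uniq.
by rewrite (depth_S r1) (depth_S r2) E1 E2.
Qed.

Lemma disj_DL u v s : v \in ch u -> {subset s <= ch u} -> v \notin s -> [disjoint D v & DL s].
Proof.
move=> Hv Hs Hn; apply: disjP => x Hx; rewrite mem_DL => /hasP [v' Hv' Hx'].
have E := disj_ch Hv (Hs _ Hv') Hx Hx'; by rewrite E Hv' in Hn.
Qed.

Lemma D_decomp u : D u = [set u] :|: (DL (Nin A p u) :|: DL (Nout A p u)).
Proof.
apply/setP => x; rewrite !inE !mem_DL -has_cat -/(ch u).
case: (eqVneq x u) => [->|xu] /=; first by rewrite desc_refl.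
apply/idP/hasP => [H|[v Hv Hx]].
  by case: (desc_decomp H xu) => v Hv Hx; exists v => //; rewrite inE.
by case: (ch_p Hv) => <- _; apply: desc_up; rewrite inE in Hx.
Qed.

Lemma D_disj1 u : [disjoint [set u] & DL (Nin A p u) :|: DL (Nout A p u)].
Proof.
rewrite disjoint_sym; apply: disjP => x; rewrite !inE !mem_DL -has_cat -/(ch u) => /hasP [v Hv].
rewrite inE => Hx /eqP Exu; subst x.
case: (ch_p Hv) => Ep vr; by move: Hx; rewrite -Ep (negbTE (not_desc_parent vr)).
Qed.

Lemma D_disj2 u : [disjoint DL (Nin A p u) & DL (Nout A p u)].
Proof.
apply: disjP => x; rewrite !mem_DL => /hasP [v Hv Hx] /hasP [v' Hv' Hx'].
have Hc : {subset Nin A p u <= ch u} by move=> y Hy; rewrite mem_cat Hy.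
have Hc' : {subset Nout A p u <= ch u} by move=> y Hy; rewrite mem_cat Hy orbT.
have E := disj_ch (Hc _ Hv) (Hc' _ Hv') Hx Hx'; subst v'.
exact: (Nin_Nout Hv Hv').
Qed.

Definition Fold n (R : pred Vd) (s : seq V) :=
  foldr (fun v acc =>
     pmul (flatten [seq Qf arcs F B A p L n v w' | w' <- enum Vd & R w']) acc)
     [:: tone Vd] s.

Lemma Qf_S n u w : Qf arcs F B A p L n.+1 u w =
  pmul (pmul (zeta F B L u w) [:: xvar w])
    (pmul (Fold n (fun w' => arcs w' w) (Nin A p u)) (Fold n (fun w' => arcs w w') (Nout A p u))).
Proof. by []. Qed.

Lemma mem_flat n v (R : pred Vd) w' m : R w' -> m \in Qf arcs F B A p L n v w' ->
  m \in flatten [seq Qf arcs F B A p L n v w' | w' <- enum Vd & R w'].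
Proof.
move=> HR Hm; apply/flatten_mapP; exists w' => //; by rewrite mem_filter HR mem_enum.
Qed.

Lemma flatP n v (R : pred Vd) m :
  m \in flatten [seq Qf arcs F B A p L n v w' | w' <- enum Vd & R w'] ->
  exists2 w', R w' & m \in Qf arcs F B A p L n v w'.
Proof. by move/flatten_mapP => [w' Hw' Hm]; exists w' => //; rewrite mem_filter in Hw'; case/andP: Hw'. Qed.

Section Complete.
Variable f : V -> Vd.
Hypothesis Hf1 : forall a b, A a b -> arcs (f a) (f b).
Hypothesis Hf2 : forall x, L x <= B (f x).

Lemma fold_complete u n (R : pred Vd) s : {subset s <= ch u} -> uniq s ->
  (forall v, v \in s -> R (f v) /\ mono f (D v) \in Qf arcs F B A p L n v (f v)) ->
  mono f (DL s) \in Fold n R s.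
Proof.
elim: s => [|v s IH] Hs Hu H /=; first by rewrite mono0 mem_seq1.
case/andP: Hu => Hvs Hu.
rewrite monoU; last by apply: disj_DL (Hs _ (mem_head _ _)) _ Hvs => y Hy; apply: Hs; rewrite inE Hy orbT.
have [HR Hm] := H v (mem_head _ _).
apply: mem_pmul; first exact: mem_flat HR Hm.
apply: IH => //; first by move=> y Hy; apply: Hs; rewrite inE Hy orbT.
by move=> y Hy; apply: H; rewrite inE Hy orbT.
Qed.

Lemma complete n u : #|V| <= depth u + n -> mono f (D u) \in Qf arcs F B A p L n u (f u).
Proof.
elim: n u => [|n IH] u Hn; first by move: (depth_lt u) Hn; lia.
rewrite Qf_S D_decomp monoU ?D_disj1 // monoU ?D_disj2 // mono1.
apply: mem_pmul; first apply: mem_pmul.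
- by rewrite /zeta /zt Hf2; case: (inS F B (f u)); rewrite mem_seq1.
- by rewrite mem_seq1.
apply: mem_pmul.
- apply: (@fold_complete u); first by move=> y Hy; rewrite mem_cat Hy.
    by apply: filter_uniq; rewrite ?enum_uniq -?enumT ?enum_uniq.
  move=> v Hv; case: (Nin_p Hv) => E vr HA; split; first by apply: Hf1.
  apply: IH; rewrite (depth_S vr) E; lia.
- apply: (@fold_complete u); first by move=> y Hy; rewrite mem_cat Hy orbT.
    by apply: filter_uniq; rewrite ?enum_uniq -?enumT ?enum_uniq.
  move=> v Hv; case: (Nout_p Hv) => E vr HA; split; first by apply: Hf1.
  apply: IH; rewrite (depth_S vr) E; lia.
Qed.
End Complete.

Definition Props v (g : V -> Vd) :=
  (forall x, x \in D v -> L x <= B (g x)) /\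
  (forall a, a \in D v -> a != v ->
     (A a (p a) -> arcs (g a) (g (p a))) /\ (A (p a) a -> arcs (g (p a)) (g a))).

Lemma Props_ext v g h : {in D v, g =1 h} -> Props v g -> Props v h.
Proof.
move=> E [H1 H2]; split => [x Hx|a Ha Hav]; first by rewrite -E //; apply: H1.
have Hpa : p a \in D v by rewrite inE; apply: desc_p; rewrite // -inE.
by rewrite -!E //; apply: H2.
Qed.

Lemma fold_sound u n (R : pred Vd) s (g0 : V -> Vd) acc : {subset s <= ch u} -> uniq s ->
  (forall v, v \in s -> forall w' m, m \in Qf arcs F B A p L n v w' ->
      exists g, [/\ g v = w', Props v g & m = mono g (D v)]) ->
  acc \in Fold n R s -> exists g, acc = mono g (DL s) /\ forall v, v \in s -> R (g v) /\ Props v g.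
Proof.
elim: s acc => [|v s IH] acc Hs Hu H /=.
  by rewrite mem_seq1 => /eqP ->; exists g0; rewrite mono0.
case/andP: Hu => Hvs Hu.
have Hs' : {subset s <= ch u} by move=> y Hy; apply: Hs; rewrite inE Hy orbT.
have Hdisj := disj_DL (Hs _ (mem_head _ _)) Hs' Hvs.
case/pmulP => a [b] [Ha Hb ->].
case: (flatP Ha) => w' HR Ha'.
case: (H v (mem_head _ _) _ _ Ha') => gv [Egv Pv Ea].
case: (IH b Hs' Hu) => // [y Hy|g [Eb Pg]]; first by apply: H; rewrite inE Hy orbT.
exists (fun x => if x \in D v then gv x else g x); split.
  rewrite monoU // Ea Eb; congr tmul; apply: mono_ext => x Hx; first by rewrite Hx.
  by rewrite (disjointFl Hdisj Hx).
move=> y; rewrite inE => /orP [/eqP ->|Hy].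
  rewrite inE desc_refl Egv; split => //; apply: Props_ext Pv => x Hx; by rewrite Hx.
have [HR' Py] := Pg _ Hy; split.
  have : y \in DL s by rewrite mem_DL; apply/hasP; exists y => //; rewrite inE desc_refl.
  by move=> Hy'; rewrite (disjointFl Hdisj Hy').
apply: Props_ext Py => x Hx.
have : x \in DL s by rewrite mem_DL; apply/hasP; exists y.
by move=> Hx'; rewrite (disjointFl Hdisj Hx').
Qed.

Lemma sound n u w m : m \in Qf arcs F B A p L n u w ->
  exists g, [/\ g u = w, Props u g & m = mono g (D u)].
Proof.
elim: n u w m => [|n IH] u w m //.
rewrite Qf_S => /pmulP [a0 [b0 [Ha Hb ->]]].
case/pmulP: Ha => z [xv [Hz Hxv ->]]; move: Hxv; rewrite mem_seq1 => /eqP ->; clear xv.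
case/pmulP: Hb => b1 [b2 [Hb1 Hb2 ->]]; clear a0 b0.
have HcI : {subset Nin A p u <= ch u} by move=> y Hy; rewrite mem_cat Hy.
have HcO : {subset Nout A p u <= ch u} by move=> y Hy; rewrite mem_cat Hy orbT.
have Hu1 : uniq (Nin A p u) by apply: filter_uniq; rewrite ?enum_uniq -?enumT ?enum_uniq.
have Hu2 : uniq (Nout A p u) by apply: filter_uniq; rewrite ?enum_uniq -?enumT ?enum_uniq.
have IH' : forall v, v \in ch u -> forall w' m, m \in Qf arcs F B A p L n v w' ->
      exists g, [/\ g v = w', Props v g & m = mono g (D v)] by move=> v _; apply: IH.
case: (fold_sound (fun _ => w) HcI Hu1 (fun v Hv => IH' v (HcI v Hv)) Hb1) => gi [E1 P1].
case: (fold_sound (fun _ => w) HcO Hu2 (fun v Hv => IH' v (HcO v Hv)) Hb2) => go [E2 P2].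
have Hzeta : L u <= B w /\ z = zt w.
  by move: Hz; rewrite /zeta /zt; case: (L u <= B w) => //; case: (inS F B w); rewrite mem_seq1 => /eqP.
case: Hzeta => HL Ez.
set g := fun x => if x == u then w else if x \in DL (Nin A p u) then gi x else go x.
have Ag1 : {in DL (Nin A p u), g =1 gi}.
  move=> x Hx; rewrite /g; case: eqP => [Ex|_]; last by rewrite Hx.
  by have := disjointFr (D_disj1 u) (set11 u); subst x; rewrite !inE Hx.
have Ag2 : {in DL (Nout A p u), g =1 go}.
  move=> x Hx; rewrite /g; case: eqP => [Ex|_]; last by rewrite (disjointFl (D_disj2 u) Hx).
  by have := disjointFr (D_disj1 u) (set11 u); subst x; rewrite !inE Hx orbT.
have PI : forall v, v \in Nin A p u -> Props v g /\ arcs (g v) w.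
  move=> v Hv; have [HR Pv] := P1 v Hv.
  have Ext : {in D v, gi =1 g}.
    by move=> x Hx; rewrite Ag1 // mem_DL; apply/hasP; exists v.
  split; first exact: Props_ext Ext Pv.
  by rewrite -Ext // inE desc_refl.
have PO : forall v, v \in Nout A p u -> Props v g /\ arcs w (g v).
  move=> v Hv; have [HR Pv] := P2 v Hv.
  have Ext : {in D v, go =1 g}.
    by move=> x Hx; rewrite Ag2 // mem_DL; apply/hasP; exists v.
  split; first exact: Props_ext Ext Pv.
  by rewrite -Ext // inE desc_refl.
have PC : forall v, v \in ch u -> Props v g /\ (A v u -> arcs (g v) w) /\ (A u v -> arcs w (g v)).
  move=> v; rewrite mem_cat => /orP [Hv|Hv].
    have [Pv Ha] := PI v Hv; case: (Nin_p Hv) => E vr HA; split => //; split => // HA'.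
    have := Hxor vr; by rewrite E HA HA'.
  have [Pv Ha] := PO v Hv; case: (Nout_p Hv) => E vr HA; split => //; split => // HA'.
  have := Hxor vr; by rewrite E HA HA'.
exists g; split.
- by rewrite /g eqxx.
- split => [y|a].
    rewrite inE => Hx; case: (eqVneq y u) => [->|xu]; first by rewrite /g eqxx.
    case: (desc_decomp Hx xu) => v Hv Hxv.
    by case: (PC v Hv) => [[Pv _] _]; apply: Pv; rewrite inE.
  rewrite inE => Ha au; case: (desc_decomp Ha au) => v Hv Hav.
  case: (PC v Hv) => Pv [H1 H2].
  case: (eqVneq a v) => [Eav|av]; last by case: Pv => _; apply; rewrite ?inE.
  subst a; case: (ch_p Hv) => E _; rewrite E /g eqxx; split => HA.
    apply: H1 HA.
  apply: H2 HA.
- rewrite D_decomp monoU ?D_disj1 // monoU ?D_disj2 // mono1 /g eqxx -Ez.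
  rewrite E1 E2; congr tmul; congr tmul; apply: mono_ext => x Hx.
  by rewrite -[RHS]/(g x) Ag1.
by rewrite -[RHS]/(g x) Ag2.
Qed.
End Tree.

Lemma Dr_all (V : finType) (A : rel V) (r : V) (p : V -> V) (Htree : rooted_oriented_tree A r p) x :
  x \in D Htree r.
Proof. rewrite inE; apply/descP; exists (depth Htree x); by case: (depth_spec Htree x). Qed.

Lemma card_pre1 (V Vd : finType) (f : V -> Vd) (X : {set V}) w :
  {in X &, injective f} -> #|X :&: [set x | f x == w]| <= 1.
Proof.
move=> Hinj; case: (pickP (fun x => (x \in X) && (f x == w))) => [v /andP [Hv /eqP Hw]|H].
  have -> : X :&: [set x | f x == w] = [set v]; last by rewrite cards1.
  apply/setP => x; rewrite !inE; apply/andP/eqP => [[Hx /eqP Hx']|->]; last by rewrite Hv Hw.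
  by apply: Hinj; rewrite // Hw.
have -> : X :&: [set x | f x == w] = set0; last by rewrite cards0.
by apply/setP => x; rewrite !inE; have := H x; rewrite /= => ->.
Qed.

Theorem lemma4 (Vd V : finType) (arcs : rel Vd) (F : Vd -> bool) (B : Vd -> nat)
    (A : rel V) (L : V -> nat) (r : V) (p : V -> V)
    (Hloop : irreflexive arcs)
    (Htree : rooted_oriented_tree A r p) :
  (exists m : term Vd,
      [/\ coef (Qpoly arcs F B A p L r) m != 0,
          m.2 = #|Sset F B|,
          (forall w, m.1 w <= 1)
        & #|[set w | m.1 w == 1]| = #|V| ])
  <-> S_embedding arcs F B A L.
Proof.
have DT : D Htree r = setT by apply/setP => x; rewrite Dr_all in_setT.
split.
- move=> [m [Hc H2 H1 _]].
  have Hm : m \in Qpoly arcs F B A p L r.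
    apply/negPn; apply/negP => /count_memPn E; by rewrite /coef E in Hc.
  case/flatten_mapP: Hm => w _ Hm.
  case: (sound Htree Hm) => g [_ [PL PA] Em].
  rewrite DT in Em; subst m.
  have Hinj : injective g.
    move=> x y Exy; apply/eqP; apply/negPn; apply/negP => nxy.
    have := H1 (g x); rewrite /mono /= ffunE setTI => Hle.
    have : [set x; y] \subset [set z | g z == g x].
      by apply/subsetP => z; rewrite !inE => /orP [/eqP ->|/eqP ->]; rewrite ?Exy.
    move/subset_leq_card; rewrite cards2 nxy => H.
    by have := leq_trans H Hle.
  exists g; split => //.
  + move=> a b Hab; case: (Hedge Htree Hab) => [[ar E]|[br E]].
      subst b; have [H _] := PA a (Dr_all Htree a) ar; exact: H.
    subst a; have [_ H] := PA b (Dr_all Htree b) br; exact: H.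
  + move=> w' Hw'.
    set X := [set x | inS F B (g x)].
    have Hsub : g @: X \subset Sset F B.
      by apply/subsetP => y /imsetP [x]; rewrite !inE => Hx ->.
    have Ecard : #|g @: X| = #|Sset F B|.
      by rewrite card_imset // -H2 /mono /= setTI.
    have := subset_cardP Ecard Hsub w'; rewrite inE Hw' => /imsetP [x _ ->].
    by exists x.
  + move=> x; apply: PL; exact: Dr_all.
- move=> [f [Hinj Harc HS HL]].
  exists (mono F B f (D Htree r)); split.
  + have Hm : mono F B f (D Htree r) \in Qpoly arcs F B A p L r.
      apply/flatten_mapP; exists (f r); first by rewrite mem_enum.
      apply: (@complete _ _ _ _ Htree _ arcs F B L f Harc HL); exact: leq_addl.
    apply/negP => /eqP E; by move/count_memPn: E; rewrite Hm.
  + rewrite DT /mono /= setTI.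
    rewrite -(card_imset _ Hinj); apply: eq_card => w.
    apply/imsetP/idP => [[x]|Hw]; first by rewrite !inE => Hx ->.
    by case: (HS w); rewrite inE in Hw => // x Ex; exists x; rewrite // inE Ex.
  + move=> w; rewrite /mono /= ffunE; apply: card_pre1 => x y _ _; exact: Hinj.
  + rewrite -cardsT -(card_imset _ Hinj); apply: eq_card => w.
    rewrite inE /mono /= ffunE DT setTI.
    apply/eqP/imsetP => [Hc|[x _ ->]].
      have : 0 < #|[set x | f x == w]| by rewrite Hc.
      by case/card_gt0P => x; rewrite inE => /eqP <-; exists x.
    have -> : [set y | f y == f x] = [set x]; last by rewrite cards1.
    by apply/setP => y; rewrite !inE; apply/eqP/eqP => [/Hinj|->].
Qed.
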